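(* In the fixed-base chain setting of the context, let $\delta\boldsymbol{\pi}\in\mathbb{R}^{10N}$ and let $i\ge 2$ be such that $\delta\mathbf{I}_j=\mathbf{0}$ for all $j>i$, where $\delta\mathbf I_j=[\delta\boldsymbol\pi_j]^\wedge$. Define $\delta\mathbf{I}_{i-1}'=\delta\mathbf{I}_{i-1}+({}^{J_i}\mathbf{X}_{i-1})^\top\delta\mathbf{I}_i\,{}^{J_i}\mathbf{X}_{i-1}$ and $\Delta{}^{J_i}\mathbf{I}_i(q_i)={}^{i}\mathbf{X}_{J_i}(q_i)^\top\delta\mathbf{I}_i\,{}^{i}\mathbf{X}_{J_i}(q_i)-\delta\mathbf{I}_i$, and write ${}^{J_i}\mathbf{v}_{i-1}={}^{J_i}\mathbf{X}_{i-1}\mathbf{v}_{i-1}$. Then $\sum_{j=1}^{N}\mathbf{v}_j^\top\delta\mathbf{I}_j\mathbf{v}_j=0$ for all $\mathbf{q},\dot{\mathbf{q}}\in\mathbb R^N$ if and only if all three of the following hold for all $\mathbf{q},\dot{\mathbf{q}}$: (a) $\boldsymbol{\Phi}_i^\top\delta\mathbf{I}_i\mathbf{v}_i=0$; (b) ${}^{J_i}\mathbf{v}_{i-1}^\top\,\Delta{}^{J_i}\mathbf{I}_i(q_i)\,{}^{J_i}\mathbf{v}_{i-1}=0$; (c) $\sum_{j=1}^{i-2}\mathbf{v}_j^\top\delta\mathbf{I}_j\mathbf{v}_j+\mathbf{v}_{i-1}^\top\delta\mathbf{I}_{i-1}'\mathbf{v}_{i-1}=0$.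
   Context: Spatial notation. For $\mathbf{x}\in\mathbb{R}^3$, $\mathbf{S}(\mathbf{x})$ is the skew-symmetric matrix with $\mathbf{S}(\mathbf{x})\mathbf{y}=\mathbf{x}\times\mathbf{y}$. For $\mathbf{v}=[\boldsymbol{\omega};\mathbf{u}]\in\mathbb{R}^6$, $(\mathbf{v}\times)=\begin{bmatrix}\mathbf{S}(\boldsymbol{\omega})&\mathbf{0}\\ \mathbf{S}(\mathbf{u})&\mathbf{S}(\boldsymbol{\omega})\end{bmatrix}$. A spatial transform is a matrix $\begin{bmatrix}\mathbf{R}&\mathbf{0}\\-\mathbf{R}\mathbf{S}(\mathbf{p})&\mathbf{R}\end{bmatrix}$ with $\mathbf{R}\in SO(3)$, $\mathbf{p}\in\mathbb{R}^3$. Inertial parameters $\boldsymbol{\pi}=[m,h_x,h_y,h_z,I_{xx},I_{xy},I_{xz},I_{yy},I_{yz},I_{zz}]^\top\in\mathbb{R}^{10}$; $[\boldsymbol{\pi}]^{\wedge}=\begin{bmatrix}\bar{\mathbf{I}}&\mathbf{S}(\mathbf{h})\\ \mathbf{S}(\mathbf{h})^{\top}&m\mathbf{1}_3\end{bmatrix}$ with $\mathbf{h}=[h_x,h_y,h_z]^\top$ and $\bar{\mathbf{I}}$ the symmetric $3\times3$ matrix with entries $I_{xx},I_{xy},\ldots$. Fixed-base chain. Body $0$ is the fixed ground with $\mathbf{v}_0=\mathbf{0}$. For $i=1,\ldots,N$, joint $i$ has coordinate $q_i\in\mathbb R$ and $\mathbf{v}_i={}^{i}\mathbf{X}_{i-1}(q_i)\mathbf{v}_{i-1}+\boldsymbol{\Phi}_i\dot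 q_i$, with $\boldsymbol{\Phi}_i\in\mathbb{R}^6$ fixed, ${}^{i}\mathbf{X}_{i-1}(q_i)={}^{i}\mathbf{X}_{J_i}(q_i)\,{}^{J_i}\mathbf{X}_{i-1}$, ${}^{J_i}\mathbf{X}_{i-1}$ a constant spatial transform, and ${}^{i}\mathbf{X}_{J_i}(q_i)$ a spatial transform with ${}^{i}\mathbf{X}_{J_i}(0)=\mathbf{1}_6$ and $\frac{d}{dq_i}{}^{i}\mathbf{X}_{J_i}(q_i)=-(\boldsymbol{\Phi}_i\times){}^{i}\mathbf{X}_{J_i}(q_i)$. $\mathbf q=(q_1,\dots,q_N)$ and $\delta\boldsymbol{\pi}=[\delta\boldsymbol{\pi}_1^\top,\ldots,\delta\boldsymbol{\pi}_N^\top]^\top$. *)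

(* Defs.v *)
From Stdlib Require Import Reals Lra Lia Arith.
Open Scope R_scope.

(* Vectors and matrices are functions on indices; only indices < 6 (resp. < 3)
   are meaningful. All operations only read in-range entries. *)
Definition Vec := nat -> R.
Definition Mat := nat -> nat -> R.

Fixpoint rsum (n : nat) (f : nat -> R) : R :=
  match n with O => 0 | S k => rsum k f + f k end.

Definition mv6 (A : Mat) (x : Vec) : Vec := fun r => rsum 6 (fun c => A r c * x c).
Definition mm6 (A B : Mat) : Mat := fun r c => rsum 6 (fun k => A r k * B k c).
Definition mm3 (A B : Mat) : Mat := fun r c => rsum 3 (fun k => A r k * B k c).
Definition trm (A : Mat) : Mat := fun r c => A c r.
Definition dot6 (x y : Vec) : R := rsum 6 (fun k => x k * y k).
Definition qf6 (x : Vec) (A : Mat) (y : Vec) : R := dot6 x (mv6 A y).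
Definition madd (A B : Mat) : Mat := fun r c => A r c + B r c.
Definition msub (A B : Mat) : Mat := fun r c => A r c - B r c.
Definition mopp (A : Mat) : Mat := fun r c => - A r c.
Definition mzero : Mat := fun _ _ => 0.
Definition idm : Mat := fun r c => if Nat.eqb r c then 1 else 0.

Definition meq6 (A B : Mat) : Prop := forall r c, (r < 6)%nat -> (c < 6)%nat -> A r c = B r c.
Definition meq3 (A B : Mat) : Prop := forall r c, (r < 3)%nat -> (c < 3)%nat -> A r c = B r c.

(* S(x) : S(x) y = x \times y *)
Definition skew (x : Vec) : Mat := fun r c =>
  match r, c with
  | O, S O => - x 2%nat | O, S (S O) => x 1%nat
  | S O, O => x 2%nat | S O, S (S O) => - x 0%nat
  | S (S O), O => - x 1%nat | S (S O), S O => x 0%nat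
  | _, _ => 0
  end.

Definition block6 (A B C D : Mat) : Mat := fun r c =>
  if Nat.ltb r 3 then (if Nat.ltb c 3 then A r c else B r (c - 3)%nat)
  else (if Nat.ltb c 3 then C (r - 3)%nat c else D (r - 3)%nat (c - 3)%nat).

Definition cross6 (v : Vec) : Mat :=
  let w := fun k => v k in
  let u := fun k => v (k + 3)%nat in
  block6 (skew w) mzero (skew u) (skew w).

Definition det3 (A : Mat) : R :=
  A 0%nat 0%nat * (A 1%nat 1%nat * A 2%nat 2%nat - A 1%nat 2%nat * A 2%nat 1%nat)
  - A 0%nat 1%nat * (A 1%nat 0%nat * A 2%nat 2%nat - A 1%nat 2%nat * A 2%nat 0%nat)
  + A 0%nat 2%nat * (A 1%nat 0%nat * A 2%nat 1%nat - A 1%nat 1%nat * A 2%nat 0%nat).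

Definition is_SO3 (Rm : Mat) : Prop := meq3 (mm3 (trm Rm) Rm) idm /\ det3 Rm = 1.

Definition spatial_transform (X : Mat) : Prop :=
  exists (Rm : Mat) (p : Vec), is_SO3 Rm /\
    meq6 X (block6 Rm mzero (mopp (mm3 Rm (skew p))) Rm).

(* [pi]^wedge, pi = [m, hx, hy, hz, Ixx, Ixy, Ixz, Iyy, Iyz, Izz] *)
Definition Ibar (pi : Vec) : Mat := fun r c =>
  match r, c with
  | O, O => pi 4%nat | O, S O => pi 5%nat | O, S (S O) => pi 6%nat
  | S O, O => pi 5%nat | S O, S O => pi 7%nat | S O, S (S O) => pi 8%nat
  | S (S O), O => pi 6%nat | S (S O), S O => pi 8%nat | S (S O), S (S O) => pi 9%nat
  | _, _ => 0
  end.
Definition hvec (pi : Vec) : Vec := fun k => pi (k + 1)%nat.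
Definition inertia_hat (pi : Vec) : Mat :=
  block6 (Ibar pi) (skew (hvec pi)) (trm (skew (hvec pi)))
         (fun r c => pi 0%nat * idm r c).

Fixpoint vel (XT : nat -> Mat) (XJ : nat -> R -> Mat) (Phi : nat -> Vec)
    (q qd : nat -> R) (k : nat) : Vec :=
  match k with
  | O => fun _ => 0
  | S j => fun r => mv6 (mm6 (XJ (S j) (q (S j))) (XT (S j)))
                        (vel XT XJ Phi q qd j) r + qd (S j) * Phi (S j) r
  end.

Definition energy_sum (XT : nat -> Mat) (XJ : nat -> R -> Mat) (Phi : nat -> Vec)
    (dpi : nat -> Vec) (q qd : nat -> R) (n : nat) : R :=
  rsum n (fun k => qf6 (vel XT XJ Phi q qd (S k)) (inertia_hat (dpi (S k)))
                       (vel XT XJ Phi q qd (S k))).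

(* Main.v *)
Require Import Defs.
From Stdlib Require Import Reals Lra Lia Arith FunctionalExtensionality.
Open Scope R_scope.

Lemma rsum_ext n f g : (forall k, (k < n)%nat -> f k = g k) -> rsum n f = rsum n g.
Proof. induction n; intros H; simpl; [reflexivity|]. rewrite IHn by (intros; apply H; lia). rewrite H by lia. reflexivity. Qed.

Lemma mv6_mm6 A B y : mv6 (mm6 A B) y = mv6 A (mv6 B y).
Proof. apply functional_extensionality; intro r. unfold mv6, mm6; simpl; ring. Qed.

Lemma dot6_trm x A z : dot6 x (mv6 (trm A) z) = dot6 (mv6 A x) z.
Proof. unfold dot6, mv6, trm; simpl; ring. Qed.

Lemma qf6_conj x A D : qf6 x (mm6 (trm A) (mm6 D A)) x = qf6 (mv6 A x) D (mv6 A x).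
Proof. unfold qf6. rewrite mv6_mm6, dot6_trm, mv6_mm6. reflexivity. Qed.

Lemma qf6_msub x A B : qf6 x (msub A B) x = qf6 x A x - qf6 x B x.
Proof. unfold qf6, dot6, mv6, msub; simpl; ring. Qed.

Lemma qf6_madd x A B : qf6 x (madd A B) x = qf6 x A x + qf6 x B x.
Proof. unfold qf6, dot6, mv6, madd; simpl; ring. Qed.

Lemma qf6_expand u P D s : qf6 (fun r => u r + s * P r) D (fun r => u r + s * P r)
  = qf6 u D u + s * (qf6 u D P + qf6 P D u) + s^2 * qf6 P D P.
Proof. unfold qf6, dot6, mv6; simpl; ring. Qed.

Lemma dot6_expand u P Q D s : dot6 Q (mv6 D (fun r => u r + s * P r))
  = dot6 Q (mv6 D u) + s * dot6 Q (mv6 D P).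
Proof. unfold dot6, mv6; simpl; ring. Qed.

Definition sym6 (D : Mat) := forall r c, (r < 6)%nat -> (c < 6)%nat -> D r c = D c r.

Lemma qf6_sym u P D : sym6 D -> qf6 u D P = qf6 P D u.
Proof.
  intro HD. unfold qf6, dot6, mv6; simpl.
  rewrite (HD 1%nat 0%nat), (HD 2%nat 0%nat), (HD 3%nat 0%nat), (HD 4%nat 0%nat), (HD 5%nat 0%nat),
    (HD 2%nat 1%nat), (HD 3%nat 1%nat), (HD 4%nat 1%nat), (HD 5%nat 1%nat),
    (HD 3%nat 2%nat), (HD 4%nat 2%nat), (HD 5%nat 2%nat),
    (HD 4%nat 3%nat), (HD 5%nat 3%nat), (HD 5%nat 4%nat) by lia.
  ring.
Qed.

Lemma inertia_sym p : sym6 (inertia_hat p).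
Proof.
  intros r c Hr Hc.
  do 6 (destruct r as [|r]; [do 6 (destruct c as [|c]; [reflexivity|]); lia|]). lia.
Qed.

Lemma qf6_ext x x' y y' D : (forall k, (k < 6)%nat -> x k = x' k) -> (forall k, (k < 6)%nat -> y k = y' k) ->
  qf6 x D y = qf6 x' D y'.
Proof.
  intros Hx Hy. unfold qf6, dot6. apply rsum_ext; intros k Hk. rewrite Hx by lia. f_equal.
  unfold mv6. apply rsum_ext; intros c Hc. rewrite Hy by lia. reflexivity.
Qed.

Lemma qf6_zero x D : meq6 D mzero -> qf6 x D x = 0.
Proof.
  intros HD. unfold qf6, dot6, mv6.
  rewrite (rsum_ext _ _ (fun _ => 0)). { simpl; ring. }
  intros k Hk. rewrite (rsum_ext _ _ (fun _ => 0)). { simpl; ring. }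
  intros c Hc. rewrite HD by lia. unfold mzero; ring.
Qed.

Lemma mv6_id M x : meq6 M idm -> forall r, (r < 6)%nat -> mv6 M x r = x r.
Proof.
  intros HM r Hr. unfold mv6. rewrite (rsum_ext _ _ (fun c => idm r c * x c)).
  2:{ intros; rewrite HM by lia; reflexivity. }
  do 6 (destruct r as [|r]; [unfold idm; simpl; ring|]). lia.
Qed.
Definition upd (f : nat -> R) (i : nat) (t : R) : nat -> R := fun j => if Nat.eqb j i then t else f j.

Lemma vel_S XT XJ Phi q qd j : vel XT XJ Phi q qd (S j) =
  fun r => mv6 (mm6 (XJ (S j) (q (S j))) (XT (S j))) (vel XT XJ Phi q qd j) r + qd (S j) * Phi (S j) r.
Proof. reflexivity. Qed.

Lemma vel_dep XT XJ Phi q q' qd qd' k :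
  (forall j, (j <= k)%nat -> q j = q' j /\ qd j = qd' j) ->
  vel XT XJ Phi q qd k = vel XT XJ Phi q' qd' k.
Proof.
  induction k; intros H; [reflexivity|].
  rewrite !vel_S. rewrite IHk by (intros; apply H; lia).
  destruct (H (S k) (le_n _)) as [-> ->]. reflexivity.
Qed.

Lemma energy_dep XT XJ Phi dpi q q' qd qd' n :
  (forall j, (j <= n)%nat -> q j = q' j /\ qd j = qd' j) ->
  energy_sum XT XJ Phi dpi q qd n = energy_sum XT XJ Phi dpi q' qd' n.
Proof.
  intros H. unfold energy_sum. apply rsum_ext. intros k Hk.
  rewrite (vel_dep XT XJ Phi q q' qd qd' (S k)) by (intros; apply H; lia). reflexivity.
Qed.

Lemma energy_split XT XJ Phi dpi q qd i N : (i <= N)%nat ->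
  (forall j, (i < j <= N)%nat -> meq6 (inertia_hat (dpi j)) mzero) ->
  energy_sum XT XJ Phi dpi q qd N = energy_sum XT XJ Phi dpi q qd i.
Proof.
  intros HiN Hz. induction N.
  - replace i with 0%nat by lia. reflexivity.
  - destruct (Nat.eq_dec i (S N)) as [->|Hne]; [reflexivity|].
    unfold energy_sum in *. rewrite <- IHN by (try lia; intros; apply Hz; lia).
    cbn [rsum]. rewrite qf6_zero by (apply Hz; lia). ring.
Qed.

Lemma Lalg D M T v P s : sym6 D ->
  qf6 (fun r => mv6 (mm6 M T) v r + s * P r) D (fun r => mv6 (mm6 M T) v r + s * P r)
  = qf6 (mv6 T v) (msub (mm6 (trm M) (mm6 D M)) D) (mv6 T v) + qf6 (mv6 T v) D (mv6 T v)
    + 2 * s * dot6 P (mv6 D (mv6 M (mv6 T v))) + s^2 * dot6 P (mv6 D P).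
Proof.
  intros HD. rewrite mv6_mm6, qf6_expand, qf6_msub, qf6_conj.
  rewrite (qf6_sym (mv6 M (mv6 T v)) P D HD). unfold qf6; ring.
Qed.

Theorem mainTheorem7
  (N : nat) (XT : nat -> Mat) (XJ : nat -> R -> Mat) (Phi : nat -> Vec)
  (HXT : forall k, (1 <= k <= N)%nat -> spatial_transform (XT k))
  (HXJ : forall k t, (1 <= k <= N)%nat -> spatial_transform (XJ k t))
  (HXJ0 : forall k, (1 <= k <= N)%nat -> meq6 (XJ k 0) idm)
  (HXJd : forall k t, (1 <= k <= N)%nat ->
     forall r c, (r < 6)%nat -> (c < 6)%nat ->
       derivable_pt_lim (fun s => XJ k s r c) t
         (- mm6 (cross6 (Phi k)) (XJ k t) r c))
  (dpi : nat -> Vec) (i : nat) (Hi : (2 <= i <= N)%nat)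
  (Hzero : forall j, (i < j <= N)%nat -> meq6 (inertia_hat (dpi j)) mzero) :
  (forall q qd : nat -> R, energy_sum XT XJ Phi dpi q qd N = 0) <->
  ((forall q qd : nat -> R,
      dot6 (Phi i) (mv6 (inertia_hat (dpi i)) (vel XT XJ Phi q qd i)) = 0) /\
   (forall q qd : nat -> R,
      let w := mv6 (XT i) (vel XT XJ Phi q qd (i - 1)) in
      let dIi := inertia_hat (dpi i) in
      let DeltaI := msub (mm6 (trm (XJ i (q i))) (mm6 dIi (XJ i (q i)))) dIi in
      qf6 w DeltaI w = 0) /\
   (forall q qd : nat -> R,
      let dIi := inertia_hat (dpi i) in
      let dIprev' := madd (inertia_hat (dpi (i - 1)%nat))
                          (mm6 (trm (XT i)) (mm6 dIi (XT i))) in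
      let v := vel XT XJ Phi q qd (i - 1) in
      energy_sum XT XJ Phi dpi q qd (i - 2) + qf6 v dIprev' v = 0)).
Proof.
  destruct i as [|[|m]]; try lia.
  replace (S (S m) - 1)%nat with (S m) by lia.
  replace (S (S m) - 2)%nat with m by lia.
  set (i := S (S m)).
  set (P := Phi i). set (D := inertia_hat (dpi i)). set (T := XT i).
  pose (Cf := fun q qd => energy_sum XT XJ Phi dpi q qd m
     + qf6 (vel XT XJ Phi q qd (S m)) (madd (inertia_hat (dpi (S m))) (mm6 (trm T) (mm6 D T)))
           (vel XT XJ Phi q qd (S m))).
  pose (Af := fun (q qd : nat -> R) => qf6 (mv6 T (vel XT XJ Phi q qd (S m)))
     (msub (mm6 (trm (XJ i (q i))) (mm6 D (XJ i (q i)))) D) (mv6 T (vel XT XJ Phi q qd (S m)))).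
  pose (Bf := fun (q qd : nat -> R) => dot6 P (mv6 D (mv6 (XJ i (q i)) (mv6 T (vel XT XJ Phi q qd (S m)))))).
  pose (p := dot6 P (mv6 D P)).
  assert (F : forall q qd, energy_sum XT XJ Phi dpi q qd N = Cf q qd + Af q qd + 2 * qd i * Bf q qd + (qd i)^2 * p).
  { intros q qd. rewrite (energy_split _ _ _ _ _ _ i N) by (auto; lia).
    unfold i. unfold energy_sum. cbn [rsum].
    rewrite (vel_S XT XJ Phi q qd (S m)). fold i. fold T. fold P. fold D.
    rewrite Lalg by apply inertia_sym.
    unfold Cf, Af, Bf, p. unfold energy_sum. rewrite qf6_madd, qf6_conj. ring. }
  assert (Fa : forall q qd, dot6 P (mv6 D (vel XT XJ Phi q qd i)) = Bf q qd + qd i * p).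
  { intros q qd. unfold i. rewrite vel_S. fold i. fold T. fold P.
    rewrite mv6_mm6, dot6_expand. reflexivity. }
  assert (Hlow : forall f t j, (j <= S m)%nat -> upd f i t j = f j).
  { intros f t j Hj. unfold upd. destruct (Nat.eqb_spec j i); [unfold i in *; lia|reflexivity]. }
  assert (Hi_ : forall f t, upd f i t i = t).
  { intros. unfold upd. rewrite Nat.eqb_refl. reflexivity. }
  assert (Vq : forall q qd t, vel XT XJ Phi (upd q i t) qd (S m) = vel XT XJ Phi q qd (S m)).
  { intros. apply vel_dep. intros; split; auto. }
  assert (Vqd : forall q qd t, vel XT XJ Phi q (upd qd i t) (S m) = vel XT XJ Phi q qd (S m)).
  { intros. apply vel_dep. intros; split; auto. }
  assert (Eq : forall q qd t, energy_sum XT XJ Phi dpi (upd q i t) qd m = energy_sum XT XJ Phi dpi q qd m).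
  { intros. apply energy_dep. intros; split; auto; apply Hlow; lia. }
  assert (Eqd : forall q qd t, energy_sum XT XJ Phi dpi q (upd qd i t) m = energy_sum XT XJ Phi dpi q qd m).
  { intros. apply energy_dep. intros; split; auto; apply Hlow; lia. }
  assert (Cq : forall q qd t, Cf (upd q i t) qd = Cf q qd).
  { intros. unfold Cf. rewrite Eq, Vq. reflexivity. }
  assert (Cqd : forall q qd t, Cf q (upd qd i t) = Cf q qd).
  { intros. unfold Cf. rewrite Eqd, Vqd. reflexivity. }
  assert (Aqd : forall q qd t, Af q (upd qd i t) = Af q qd).
  { intros. unfold Af. rewrite Vqd. reflexivity. }
  assert (Bqd : forall q qd t, Bf q (upd qd i t) = Bf q qd).
  { intros. unfold Bf. rewrite Vqd. reflexivity. }
  assert (A0 : forall q qd, Af (upd q i 0) qd = 0).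
  { intros. unfold Af. rewrite Hi_, qf6_msub, qf6_conj.
    assert (HM : meq6 (XJ i 0) idm) by (apply HXJ0; unfold i; lia).
    rewrite (qf6_ext (mv6 (XJ i 0) (mv6 T (vel XT XJ Phi (upd q i 0) qd (S m))))
                     (mv6 T (vel XT XJ Phi (upd q i 0) qd (S m)))
                     (mv6 (XJ i 0) (mv6 T (vel XT XJ Phi (upd q i 0) qd (S m))))
                     (mv6 T (vel XT XJ Phi (upd q i 0) qd (S m)))) by (intros; apply mv6_id; auto).
    ring. }
  split.
  - intros H.
    assert (K : forall q qd, Cf q qd + Af q qd = 0 /\ Bf q qd = 0 /\ p = 0).
    { intros q qd.
      pose proof (H q (upd qd i 0)) as H0. pose proof (H q (upd qd i 1)) as H1.
      pose proof (H q (upd qd i (-1))) as H2.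
      rewrite F, Cqd, Aqd, Bqd, Hi_ in H0, H1, H2. nra. }
    assert (KC : forall q qd, Cf q qd = 0).
    { intros q qd. destruct (K (upd q i 0) qd) as [K1 _]. rewrite A0, Cq in K1. lra. }
    split; [|split].
    + intros q qd. fold P D. rewrite Fa. destruct (K q qd) as [_ [-> ->]]. ring.
    + intros q qd. cbv zeta. fold T D. destruct (K q qd) as [K1 _]. rewrite KC in K1.
      unfold Af in K1. lra.
    + intros q qd. cbv zeta. fold T D. apply KC.
  - intros [Ha [Hb Hc]] q qd. rewrite F.
    assert (HC : Cf q qd = 0) by (apply Hc).
    assert (HA : Af q qd = 0) by (apply Hb).
    pose proof (Ha q (upd qd i 0)) as H0. pose proof (Ha q (upd qd i 1)) as H1.
    fold P D in H0, H1. rewrite Fa, Bqd, Hi_ in H0, H1.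
    assert (HB : Bf q qd = 0) by lra. assert (Hp : p = 0) by lra.
    rewrite HC, HA, HB, Hp. ring.
Qed.
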